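(* Let $R\in(-1,1)^{M+1}$, $T_n=\sqrt{1-R_n^2}$, and let $\mathsf{p}\in\mathsf{S}_M$ with $(k,b)=(\kappa(\mathsf{p}),\beta(\mathsf{p}))$. Then $$w(\mathsf{p})=(-R)^{\tilde k-b}R^{k-b}T^{2b}.$$
   Context: Scattering sequences: $\mathsf{S}_M$ ($M\ge1$) is the set of integer sequences $\mathsf{p}=(i_0,\ldots,i_L)$ with $L\ge2$, $i_0=i_L=-1$, $i_j\in\{0,\ldots,M\}$ for $1\le j\le L-1$, and $|i_{j+1}-i_j|=1$ for all $j$. $\kappa(\mathsf{p})=(k_0,\ldots,k_M)$: $k_n$ is the number of maximal blocks of consecutive indices $j\in\{0,\ldots,L\}$ with $i_j\ge n$; $\beta(\mathsf{p})=(b_0,\ldots,b_M)$: $b_n$ is the number of those blocks containing at least two indices. Weight: for $1\le j\le L-1$ with $i_j=m$, set $w_j=R_m$ if $i_{j-1}=i_{j+1}=m-1$; $w_j=-R_m$ if $i_{j-1}=i_{j+1}=m+1$; $w_j=\sqrt{1-R_m^2}$ otherwise; $w(\mathsf{p})=\prod_{j=1}^{L-1}w_j$. $\tilde k=(k_1,\ldots,k_M,0)$. Multi-index powers: $S^d=\prod_{n=0}^M S_n^{d_n}$. *)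

(* Defs.v *)
From Stdlib Require Import Reals ZArith List Bool.
Import ListNotations.
Local Open Scope bool_scope.
Open Scope R_scope.

Definition scattering_seq (M : nat) (p : list Z) : Prop :=
  (3 <= length p)%nat /\
  hd 0%Z p = (-1)%Z /\
  last p 0%Z = (-1)%Z /\
  (forall j, (1 <= j < length p - 1)%nat ->
      (0 <= nth j p 0%Z <= Z.of_nat M)%Z) /\
  (forall j, (j + 1 < length p)%nat ->
      Z.abs (nth (j + 1) p 0%Z - nth j p 0%Z) = 1%Z).

(* Lengths of the maximal blocks of consecutive entries with value >= n,
   scanning left to right; [cur] is the length of the current open block. *)
Fixpoint block_lengths (n : Z) (l : list Z) (cur : nat) : list nat :=
  match l with
  | [] => if Nat.eqb cur 0 then [] else [cur]
  | x :: t =>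
      if Z.leb n x then block_lengths n t (S cur)
      else if Nat.eqb cur 0 then block_lengths n t 0
           else cur :: block_lengths n t 0
  end.

Definition kappa (p : list Z) (n : nat) : nat :=
  length (block_lengths (Z.of_nat n) p 0).

Definition beta (p : list Z) (n : nat) : nat :=
  length (filter (fun c => Nat.leb 2 c) (block_lengths (Z.of_nat n) p 0)).

Definition kappa_tilde (M : nat) (p : list Z) (n : nat) : nat :=
  if Nat.ltb n M then kappa p (S n) else 0%nat.

(* local weight w_j given i_{j-1} = a, i_j = m, i_{j+1} = c *)
Definition wloc (Rc : nat -> R) (a m c : Z) : R :=
  let r := Rc (Z.to_nat m) in
  if Z.eqb a (m - 1) && Z.eqb c (m - 1) then r
  else if Z.eqb a (m + 1) && Z.eqb c (m + 1) then - r
  else sqrt (1 - r ^ 2).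

Fixpoint wprod (Rc : nat -> R) (prev : Z) (l : list Z) : R :=
  match l with
  | x :: ((y :: _) as t) => wloc Rc prev x y * wprod Rc x t
  | _ => 1
  end.

Definition weight (Rc : nat -> R) (p : list Z) : R :=
  match p with
  | [] => 1
  | a :: t => wprod Rc a t
  end.

Definition prod_0_M (M : nat) (f : nat -> R) : R :=
  fold_right (fun n acc => f n * acc) 1 (seq 0 (S M)).

Definition Tc (Rc : nat -> R) (n : nat) : R := sqrt (1 - Rc n ^ 2).

(* (-R)^(tilde k - b) R^(k - b) T^(2b), exponents in Z (no truncation) *)
Definition rhs (M : nat) (Rc : nat -> R) (p : list Z) : R :=
  prod_0_M M (fun n =>
    powerRZ (- Rc n) (Z.of_nat (kappa_tilde M p n) - Z.of_nat (beta p n)) *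
    powerRZ (Rc n) (Z.of_nat (kappa p n) - Z.of_nat (beta p n)) *
    powerRZ (Tc Rc n) (2 * Z.of_nat (beta p n))).

(* Main.v *)
Require Import Defs.
From Stdlib Require Import Reals ZArith List Lia Bool.
Import ListNotations.
Open Scope R_scope.
Open Scope Z_scope.

Fixpoint stepok (l : list Z) : Prop :=
  match l with x :: ((y :: _) as t) => Z.abs (y - x) = 1%Z /\ stepok t | _ => True end.
Fixpoint innerok (M : Z) (l : list Z) : Prop :=
  match l with x :: ((y :: (_ :: _)) as t) => (0 <= y <= M)%Z /\ innerok M t | _ => True end.
Fixpoint cnt2 (g : Z -> Z -> bool) (l : list Z) : nat :=
  match l with x :: ((y :: _) as t) => (Nat.b2n (g x y) + cnt2 g t)%nat | _ => 0%nat end.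
Fixpoint cnt3 (f : Z -> Z -> Z -> bool) (l : list Z) : nat :=
  match l with x :: ((y :: (c :: _)) as t) => (Nat.b2n (f x y c) + cnt3 f t)%nat | _ => 0%nat end.

Definition up (z x y : Z) := Z.eqb x (z-1) && Z.eqb y z.
Definition dn (z x y : Z) := Z.eqb x z && Z.eqb y (z-1).
Definition peak (z a b c : Z) := Z.eqb a (z-1) && Z.eqb b z && Z.eqb c (z-1).
Definition valley (z a b c : Z) := Z.eqb a (z+1) && Z.eqb b z && Z.eqb c (z+1).
Definition uu (z a b c : Z) := Z.eqb a (z-1) && Z.eqb b z && Z.eqb c (z+1).
Definition dd (z a b c : Z) := Z.eqb a (z+1) && Z.eqb b z && Z.eqb c (z-1).

Ltac zeqb := repeat match goal with |- context [Z.eqb ?x ?y] => destruct (Z.eqb_spec x y) end;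
  cbn [andb Nat.b2n]; try reflexivity; try lia.

Lemma kappa_aux z : forall l prev cur, stepok (prev::l) -> (cur = 0%nat <-> (prev < z)%Z) ->
  (last (prev::l) 0 < z)%Z ->
  length (block_lengths z l cur) = (cnt2 (up z) (prev::l) + (if Nat.eqb cur 0 then 0 else 1))%nat.
Proof.
  induction l as [|a l IH]; intros prev cur Hs Hc Hl.
  - simpl in Hl. assert (cur = 0%nat) by (apply Hc; lia). subst. reflexivity.
  - destruct Hs as [Ha Hs]. change (last (prev :: a :: l) 0) with (last (a::l) 0) in Hl.
    change (cnt2 (up z) (prev :: a :: l)) with (Nat.b2n (up z prev a) + cnt2 (up z) (a::l))%nat.
    simpl block_lengths. destruct (Z.leb_spec z a).
    + rewrite (IH a (S cur) Hs); [|split; intros; lia|exact Hl].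
      destruct cur.
      * assert (prev < z)%Z by (apply Hc; auto).
        assert (up z prev a = true) as -> by (unfold up; zeqb). simpl; lia.
      * assert (~ (prev < z)%Z) by (intro H'; apply Hc in H'; discriminate).
        assert (up z prev a = false) as -> by (unfold up; zeqb). simpl; lia.
    + assert (up z prev a = false) as -> by (unfold up; zeqb).
      destruct cur; simpl.
      * rewrite (IH a 0%nat Hs); [simpl; lia|split; intros; lia|exact Hl].
      * rewrite (IH a 0%nat Hs); [simpl; lia|split; intros; lia|exact Hl].
Qed.

Lemma beta_aux z : forall l pprev prev cur, stepok (prev::l) -> (cur = 0%nat <-> (prev < z)%Z) ->
  (cur = 1%nat -> pprev = (z-1)%Z /\ prev = z) -> ((2 <= cur)%nat -> z <= pprev) ->
  (last (prev::l) 0 < z)%Z ->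
  length (filter (fun c => Nat.leb 2 c) (block_lengths z l cur)) =
    (cnt3 (uu z) (pprev::prev::l) + (if Nat.leb 2 cur then 1 else 0))%nat.
Proof.
  induction l as [|a l IH]; intros pprev prev cur Hs Hc H1 H2 Hl.
  - simpl in Hl. assert (cur = 0%nat) by (apply Hc; lia). subst. reflexivity.
  - destruct Hs as [Ha Hs]. change (last (prev :: a :: l) 0) with (last (a::l) 0) in Hl.
    change (cnt3 (uu z) (pprev :: prev :: a :: l)) with (Nat.b2n (uu z pprev prev a) + cnt3 (uu z) (prev::a::l))%nat.
    simpl block_lengths. destruct (Z.leb_spec z a).
    + rewrite (IH prev a (S cur)); auto.
      2: split; intros; lia.
      2: { intros Hc1. assert (cur = 0%nat) by lia. subst. assert (prev < z)%Z by (apply Hc; auto). lia. }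
      2: { intros Hc2. assert (cur <> 0%nat) by lia. destruct (Z.lt_ge_cases prev z) as [Hp|Hp]; [apply Hc in Hp; lia| lia]. }
      destruct cur as [|[|cur]].
      * assert (prev < z)%Z by (apply Hc; auto).
        assert (uu z pprev prev a = false) as -> by (unfold uu; zeqb). simpl; lia.
      * destruct (H1 eq_refl).
        assert (uu z pprev prev a = true) as -> by (unfold uu; zeqb). simpl; lia.
      * assert (z <= pprev)%Z by (apply H2; lia).
        assert (uu z pprev prev a = false) as -> by (unfold uu; zeqb). simpl; lia.
    + assert (uu z pprev prev a = false) as -> by (unfold uu; zeqb).
      destruct cur as [|cur]; cbn [Nat.eqb].
      * rewrite (IH prev a 0%nat Hs); [simpl; lia|split; intros; lia|intros; lia|intros; lia|exact Hl].
      * cbn [filter length]; destruct (Nat.leb 2 (S cur)); cbn [length]; (rewrite (IH prev a 0%nat Hs); [|split; intros; lia|intros; lia|intros; lia|exact Hl]).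
        all: simpl; lia.
Qed.

Lemma cross z : forall l x, stepok (x::l) ->
  (Z.of_nat (cnt2 (up z) (x::l)) - Z.of_nat (cnt2 (dn z) (x::l)) =
   (if Z.leb z (last (x::l) 0) then 1 else 0) - (if Z.leb z x then 1 else 0))%Z.
Proof.
  induction l as [|a l IH]; intros x Hs.
  - simpl. destruct (Z.leb z x); reflexivity.
  - destruct Hs as [Ha Hs]. change (last (x :: a :: l) 0) with (last (a::l) 0).
    change (cnt2 (up z) (x :: a :: l)) with (Nat.b2n (up z x a) + cnt2 (up z) (a::l))%nat.
    change (cnt2 (dn z) (x :: a :: l)) with (Nat.b2n (dn z x a) + cnt2 (dn z) (a::l))%nat.
    rewrite !Nat2Z.inj_add. specialize (IH a Hs). revert IH.
    generalize (cnt2 (up z) (a::l)) (cnt2 (dn z) (a::l)) (last (a::l) 0). intros U D e.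
    unfold up, dn; destruct (Z.leb_spec z x), (Z.leb_spec z a), (Z.leb_spec z e); zeqb.
Qed.

Lemma cntE (g : Z -> Z -> bool) (f h : Z -> Z -> Z -> bool) :
  (forall x y c, Z.abs (y - x) = 1%Z -> Z.abs (c - y) = 1%Z ->
     Nat.b2n (g y c) = (Nat.b2n (f x y c) + Nat.b2n (h x y c))%nat) ->
  forall t x y, stepok (x::y::t) -> cnt2 g (y::t) = (cnt3 f (x::y::t) + cnt3 h (x::y::t))%nat.
Proof.
  intros Hg. induction t as [|c t IH]; intros x y Hs.
  - reflexivity.
  - destruct Hs as [H1 [H2 Hs]].
    change (cnt2 g (y :: c :: t)) with (Nat.b2n (g y c) + cnt2 g (c::t))%nat.
    change (cnt3 f (x :: y :: c :: t)) with (Nat.b2n (f x y c) + cnt3 f (y::c::t))%nat.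
    change (cnt3 h (x :: y :: c :: t)) with (Nat.b2n (h x y c) + cnt3 h (y::c::t))%nat.
    rewrite (IH y c) by (split; auto). rewrite (Hg x y c H1 H2). lia.
Qed.

Lemma cntD (g : Z -> Z -> bool) (f h : Z -> Z -> Z -> bool) e :
  (forall x y c, Z.abs (y - x) = 1%Z -> Z.abs (c - y) = 1%Z ->
     Nat.b2n (g x y) = (Nat.b2n (f x y c) + Nat.b2n (h x y c))%nat) ->
  (forall x, g x e = false) ->
  forall l, stepok l -> last l 0%Z = e -> cnt2 g l = (cnt3 f l + cnt3 h l)%nat.
Proof.
  intros Hg He. induction l as [|x t IH]; intros Hs Hl; [reflexivity|].
  destruct t as [|y t]; [reflexivity|].
  destruct t as [|c t].
  - simpl in Hl. subst. simpl. rewrite He. reflexivity.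
  - destruct Hs as [H1 [H2 Hs]].
    change (cnt2 g (x :: y :: c :: t)) with (Nat.b2n (g x y) + cnt2 g (y::c::t))%nat.
    change (cnt3 f (x :: y :: c :: t)) with (Nat.b2n (f x y c) + cnt3 f (y::c::t))%nat.
    change (cnt3 h (x :: y :: c :: t)) with (Nat.b2n (h x y c) + cnt3 h (y::c::t))%nat.
    rewrite IH; [| split; auto | exact Hl]. rewrite (Hg x y c H1 H2). lia.
Qed.

Lemma inst1 z : (0 <= z)%Z -> forall l, stepok l -> last l 0%Z = (-1)%Z ->
  cnt2 (up z) l = (cnt3 (peak z) l + cnt3 (uu z) l)%nat.
Proof.
  intros Hz. apply cntD with (e := (-1)%Z).
  - intros x y c H1 H2. unfold up, peak, uu. zeqb.
  - intros x. unfold up. zeqb.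
Qed.

Lemma inst2 z : forall t x y, stepok (x::y::t) ->
  cnt2 (up (z+1)) (y::t) = (cnt3 (valley z) (x::y::t) + cnt3 (uu z) (x::y::t))%nat.
Proof.
  apply cntE. intros x y c H1 H2. unfold up, valley, uu. zeqb.
Qed.

Lemma inst3 z : forall t x y, stepok (x::y::t) ->
  cnt2 (dn z) (y::t) = (cnt3 (peak z) (x::y::t) + cnt3 (dd z) (x::y::t))%nat.
Proof.
  apply cntE. intros x y c H1 H2. unfold dn, peak, dd. zeqb.
Qed.

Lemma cnt2_big Mz : forall l, Forall (fun x => (x <= Mz)%Z) l -> cnt2 (up (Mz+1)) l = 0%nat.
Proof.
  induction l as [|x t IH]; intros H; [reflexivity|].
  inversion H; subst. destruct t as [|y t]; [reflexivity|].
  change (cnt2 (up (Mz+1)) (x :: y :: t)) with (Nat.b2n (up (Mz+1) x y) + cnt2 (up (Mz+1)) (y::t))%nat.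
  rewrite IH by auto. inversion H3; subst.
  assert (up (Mz+1) x y = false) as -> by (unfold up; zeqb). reflexivity.
Qed.

Lemma inner_forall Mz : forall l x, innerok Mz (x::l) -> (last (x::l) 0 <= Mz)%Z -> (x <= Mz)%Z ->
  Forall (fun x => (x <= Mz)%Z) (x::l).
Proof.
  induction l as [|y t IH]; intros x Hi Hl Hx.
  - constructor; auto.
  - constructor; auto. destruct t as [|c t].
    + simpl in Hl. constructor; auto.
    + destruct Hi as [Hy Hi]. apply IH; auto. lia.
Qed.

Lemma nth_stepok : forall l, (forall j, (j + 1 < length l)%nat ->
   Z.abs (nth (j + 1) l 0 - nth j l 0) = 1) -> stepok l.
Proof.
  induction l as [|x t IH]; intros H; [exact I|].
  destruct t as [|y t]; [exact I|]. split.
  - apply (H 0%nat). simpl; lia.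
  - apply IH. intros j Hj. specialize (H (S j)). simpl in H. apply H. simpl in *. lia.
Qed.

Lemma nth_innerok Mz : forall l, (forall j, (1 <= j < length l - 1)%nat ->
   (0 <= nth j l 0 <= Mz)) -> innerok Mz l.
Proof.
  induction l as [|x t IH]; intros H; [exact I|].
  destruct t as [|y t]; [exact I|]. destruct t as [|c t]; [exact I|]. split.
  - apply (H 1%nat). simpl; lia.
  - apply IH. intros j Hj. specialize (H (S j)). simpl in H. apply H. simpl in *. lia.
Qed.

Open Scope R_scope.

Definition prodl (s : list nat) (f : nat -> R) : R :=
  fold_right (fun n acc => f n * acc) 1 s.

Lemma prodl_mul s f g : prodl s (fun n => f n * g n) = prodl s f * prodl s g.
Proof. induction s; simpl; [ring|]. rewrite IHs. ring. Qed.

Lemma prodl_ext s f g : (forall n, In n s -> f n = g n) -> prodl s f = prodl s g.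
Proof. induction s; intros H; simpl; [reflexivity|]. rewrite H by (left; auto). rewrite IHs; auto.
  intros; apply H; right; auto. Qed.

Lemma prodl_one s : prodl s (fun _ => 1) = 1.
Proof. induction s; simpl; [reflexivity|]. rewrite IHs; ring. Qed.

Lemma prodl_single s k f : NoDup s -> In k s -> (forall n, In n s -> n <> k -> f n = 1) ->
  prodl s f = f k.
Proof.
  induction s as [|a s IH]; intros Hn Hk H; [destruct Hk|].
  inversion Hn; subst. simpl. destruct Hk as [Hk|Hk].
  - subst. rewrite (prodl_ext s f (fun _ => 1)). rewrite prodl_one; ring.
    intros n Hin. apply H. right; auto. intro; subst; contradiction.
  - rewrite IH; auto. rewrite H. ring. left; auto. intro; subst; contradiction.
    intros; apply H; auto. right; auto.
Qed.

Section W.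
Variable Rc : nat -> R.

Definition G (l : list Z) (n : nat) : R :=
  let z := Z.of_nat n in
  (- Rc n) ^ (cnt3 (valley z) l) * Rc n ^ (cnt3 (peak z) l) *
  Tc Rc n ^ (cnt3 (uu z) l + cnt3 (dd z) l).

Definition ex (a b c : Z) (n : nat) : R :=
  let z := Z.of_nat n in
  (- Rc n) ^ (Nat.b2n (valley z a b c)) * Rc n ^ (Nat.b2n (peak z a b c)) *
  Tc Rc n ^ (Nat.b2n (uu z a b c) + Nat.b2n (dd z a b c)).

Lemma G_cons a b c t n : G (a::b::c::t) n = G (b::c::t) n * ex a b c n.
Proof.
  unfold G, ex. simpl cnt3. rewrite !pow_add. ring.
Qed.

Lemma ex_other a b c n : Z.of_nat n <> b -> ex a b c n = 1.
Proof.
  intros H. unfold ex, valley, peak, uu, dd.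
  destruct (Z.eqb_spec b (Z.of_nat n)); [lia|].
  rewrite !andb_false_r. simpl. ring.
Qed.

Lemma ex_here a c k : Z.abs (Z.of_nat k - a) = 1%Z -> Z.abs (c - Z.of_nat k) = 1%Z ->
  wloc Rc a (Z.of_nat k) c = ex a (Z.of_nat k) c k.
Proof.
  intros H1 H2. unfold wloc, ex, valley, peak, uu, dd, Tc. rewrite Nat2Z.id.
  rewrite Z.eqb_refl. rewrite !andb_true_r.
  destruct (Z.eqb_spec a (Z.of_nat k - 1)); destruct (Z.eqb_spec c (Z.of_nat k - 1));
  destruct (Z.eqb_spec a (Z.of_nat k + 1)); destruct (Z.eqb_spec c (Z.of_nat k + 1));
  try lia; simpl; ring.
Qed.

Lemma weight_G (M : nat) : forall l, stepok l -> innerok (Z.of_nat M) l ->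
  weight Rc l = prodl (seq 0 (S M)) (G l).
Proof.
  intros l. induction l as [|a t IH]; intros Hs Hi.
  - rewrite (prodl_ext _ _ (fun _ => 1)); [rewrite prodl_one; reflexivity|].
    intros; unfold G; simpl; ring.
  - destruct t as [|b t].
    + rewrite (prodl_ext _ _ (fun _ => 1)); [rewrite prodl_one; reflexivity|].
      intros; unfold G; simpl; ring.
    + destruct t as [|c t].
      * rewrite (prodl_ext _ _ (fun _ => 1)); [rewrite prodl_one; reflexivity|].
        intros; unfold G; simpl; ring.
      * destruct Hs as [H1 [H2 Hs]]. destruct Hi as [Hb Hi].
        change (weight Rc (a :: b :: c :: t)) with (wloc Rc a b c * weight Rc (b :: c :: t)).
        rewrite IH by (simpl; auto).
        rewrite (prodl_ext _ (G (a::b::c::t)) (fun n => G (b::c::t) n * ex a b c n))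
          by (intros; apply G_cons).
        rewrite prodl_mul.
        rewrite (prodl_single _ (Z.to_nat b) (ex a b c)).
        -- pose proof (ex_here a c (Z.to_nat b)) as E. rewrite Z2Nat.id in E by lia. rewrite E by lia. ring.
        -- apply seq_NoDup.
        -- apply in_seq. lia.
        -- intros n Hn Hne. apply ex_other. intro; subst. apply Hne. lia.
Qed.
End W.

Lemma bl_neg z l : (0 <= z)%Z -> block_lengths z ((-1)%Z :: l) 0 = block_lengths z l 0.
Proof.
  intros Hz. change (block_lengths z ((-1)%Z :: l) 0) with
    (if Z.leb z (-1) then block_lengths z l 1 else if Nat.eqb 0 0 then block_lengths z l 0
     else 0%nat :: block_lengths z l 0).
  destruct (Z.leb_spec z (-1)); [lia|]. reflexivity.
Qed.

Lemma kappa_eq z t : (0 <= z)%Z -> stepok ((-1)%Z::t) -> last ((-1)%Z::t) 0%Z = (-1)%Z ->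
  length (block_lengths z ((-1)%Z::t) 0) = cnt2 (up z) ((-1)%Z::t).
Proof.
  intros Hz Hs Hl. rewrite bl_neg by exact Hz.
  rewrite (kappa_aux z t (-1)%Z 0%nat Hs); [simpl; lia|split; intros; lia|lia].
Qed.

Lemma beta_eq z y t : (0 <= z)%Z -> stepok ((-1)%Z::y::t) -> last ((-1)%Z::y::t) 0%Z = (-1)%Z ->
  length (filter (fun c => Nat.leb 2 c) (block_lengths z ((-1)%Z::y::t) 0)) = cnt3 (uu z) ((-1)%Z::y::t).
Proof.
  intros Hz Hs Hl. rewrite bl_neg by exact Hz.
  rewrite (beta_aux z (y::t) (-1)%Z (-1)%Z 0%nat Hs); [|split; intros; lia|intros; lia|intros; lia|lia].
  change (cnt3 (uu z) ((-1)%Z :: (-1)%Z :: y :: t)) with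
    (Nat.b2n (uu z (-1) (-1) y) + cnt3 (uu z) ((-1)%Z :: y :: t))%nat.
  assert (uu z (-1) (-1) y = false) as -> by (unfold uu; zeqb). simpl; lia.
Qed.

Theorem lemma6p2 (M : nat) (Rc : nat -> R) (p : list Z)
  (hM : (1 <= M)%nat)
  (hR : forall n, (n <= M)%nat -> -1 < Rc n < 1)
  (hp : scattering_seq M p) :
  weight Rc p = rhs M Rc p.
Proof.
  destruct hp as (Hlen & Hhd & Hlast & Hin & Hst).
  assert (Hs : stepok p) by (apply nth_stepok; exact Hst).
  assert (Hi : innerok (Z.of_nat M) p) by (apply nth_innerok; exact Hin).
  rewrite (weight_G Rc M p Hs Hi). unfold rhs, prod_0_M. fold (prodl (seq 0 (S M))).
  destruct p as [|x t]; [simpl in Hlen; lia|]. simpl in Hhd. subst x.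
  destruct t as [|y t]; [simpl in Hlen; lia|].
  assert (Hall : Forall (fun x => (x <= Z.of_nat M)%Z) ((-1)%Z :: y :: t)).
  { apply inner_forall; auto; rewrite ?Hlast; lia. }
  apply prodl_ext. intros n Hn. apply in_seq in Hn.
  set (z := Z.of_nat n).
  assert (Hz : (0 <= z)%Z) by (unfold z; lia).
  assert (HK : kappa ((-1)%Z :: y :: t) n = cnt2 (up z) ((-1)%Z :: y :: t))
    by (apply kappa_eq; auto).
  assert (HB : beta ((-1)%Z :: y :: t) n = cnt3 (uu z) ((-1)%Z :: y :: t))
    by (apply beta_eq; auto).
  assert (HKT : kappa_tilde M ((-1)%Z :: y :: t) n = cnt2 (up (z+1)) ((-1)%Z :: y :: t)).
  { unfold kappa_tilde. destruct (Nat.ltb_spec n M).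
    - unfold kappa. rewrite kappa_eq; auto; [|lia]. f_equal. f_equal. unfold z. lia.
    - assert (n = M) by lia. subst n. unfold z. rewrite cnt2_big; auto. }
  pose proof (inst1 z Hz _ Hs Hlast) as E1.
  pose proof (inst2 z t (-1)%Z y Hs) as E2.
  pose proof (inst3 z t (-1)%Z y Hs) as E3.
  pose proof (cross z (y::t) (-1)%Z Hs) as E4.
  rewrite Hlast in E4.
  change (cnt2 (up (z+1)) ((-1)%Z :: y :: t)) with
    (Nat.b2n (up (z+1) (-1) y) + cnt2 (up (z+1)) (y :: t))%nat in HKT.
  change (cnt2 (dn z) ((-1)%Z :: y :: t)) with
    (Nat.b2n (dn z (-1) y) + cnt2 (dn z) (y :: t))%nat in E4.
  assert (up (z+1) (-1) y = false) as Hf1 by (unfold up; zeqb).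
  assert (dn z (-1) y = false) as Hf2 by (unfold dn; zeqb).
  rewrite Hf1 in HKT. rewrite Hf2 in E4. simpl Nat.b2n in HKT, E4.
  rewrite HK, HB, HKT. unfold G. fold z.
  set (V := cnt3 (valley z) ((-1)%Z :: y :: t)) in *.
  set (P := cnt3 (peak z) ((-1)%Z :: y :: t)) in *.
  set (U := cnt3 (uu z) ((-1)%Z :: y :: t)) in *.
  set (D := cnt3 (dd z) ((-1)%Z :: y :: t)) in *.
  replace (Z.of_nat (0 + cnt2 (up (z + 1)) (y :: t)) - Z.of_nat U)%Z with (Z.of_nat V) by lia.
  replace (Z.of_nat (cnt2 (up z) ((-1)%Z :: y :: t)) - Z.of_nat U)%Z with (Z.of_nat P) by lia.
  destruct (Z.leb_spec z (-1)); [lia|].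
  replace (2 * Z.of_nat U)%Z with (Z.of_nat (U + D)) by lia.
  rewrite <- !pow_powerRZ. reflexivity.
Qed.
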